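(* Let $K$ be a commutative field and $q\in K$. Define a coproduct $\Delta'_q$ on $\mathcal{H}_{\mathcal{PP}}$ by, for every plane poset $P$, $$\Delta'_q(P)=\sum_{P_1P_2=P}q^{|P_1||P_2|}P_1\otimes P_2,$$ the sum running over pairs of plane posets $(P_1,P_2)$ (possibly empty) with $P_1P_2=P$. Then for all $x,y,z\in\mathcal{H}_{\mathcal{PP}}$, $\langle x\triangleleft y,z\rangle_q=\langle x\otimes y,\Delta'_q(z)\rangle_q$.
   Context: A plane poset is a finite set with two partial orders $\leq_h,\leq_r$ such that two distinct elements are $\leq_h$-comparable iff they are not $\leq_r$-comparable, considered up to isomorphism; $\mathcal{H}_{\mathcal{PP}}$ is the $K$-vector space with basis these isomorphism classes; $|P|$ is the cardinality. $PQ$ is the plane poset on $P\sqcup Q$ with $P,Q$ plane subposets, no $\leq_h$-comparability between $P$ and $Q$, and $x<_r y$ for $x\in P,y\in Q$; $P\triangleleft Q$ is the plane poset on $P\sqcup Q$ with $P,Q$ plane subposets, no $\leq_r$-comparability between $P$ and $Q$, and $x<_h y$ for $x\in P,y\in Q$; both extended bilinearly. On a plane poset, $x\leq y$ iff ($x\leq_h y$ or $x\leq_r y$) is a total order (known fact); for $P,Q$ of equal cardinality $\theta_{P,Q}$ is the increasing bijection $P\to Q$, and $P\leq Q$ means: $\theta_{P,Q}(x)\leq_h\theta_{P,Q}(y)$ in $Q$ implies $x\leq_h y$ in $P$. $\iota(P)=(P,\leq_r,\leq_h)$. The pairing: $\langle P,Q\rangle_q=q^{\phi(P,Q)}$ if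 $\iota(P)\leq Q$ and $0$ otherwise, extended bilinearly, with $\phi(P,Q)=\sharp\{(x,y)\in P^2\mid x<_r y,\ \theta_{P,Q}(x)<_h\theta_{P,Q}(y)\}+\sharp\{(x,y)\in P^2\mid x<_h y,\ \theta_{P,Q}(x)<_r\theta_{P,Q}(y)\}$ and $q^0=1$; $\langle a\otimes b,c\otimes d\rangle_q=\langle a,c\rangle_q\langle b,d\rangle_q$. *)

(* Defs.v *)
From HB Require Import structures.
From mathcomp Require Import all_boot all_order all_algebra.
Set Implicit Arguments. Unset Strict Implicit. Unset Printing Implicit Defensive.
Import GRing.Theory.
Local Open Scope ring_scope.

(* A (raw) finite set with two relations; a plane poset is such a structure
   satisfying [is_plane].  Plane posets are handled through representatives;
   all functions below are isomorphism invariant. *)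
Record ppr := PPr { car : finType; ph : rel car; pr : rel car }.

Definition porderb (T : finType) (R : rel T) : bool :=
  [&& [forall x, R x x],
      [forall x, forall y, (R x y && R y x) ==> (x == y)] &
      [forall x, forall y, forall z, (R x y && R y z) ==> R x z]].

Definition comparab (T : finType) (R : rel T) (x y : T) : bool := R x y || R y x.

Definition is_plane (P : ppr) : bool :=
  [&& porderb (@ph P), porderb (@pr P) &
      [forall x : car P, forall y : car P,
         (x != y) ==> (comparab (@ph P) x y == ~~ comparab (@pr P) x y)]].

Definition strict (T : finType) (R : rel T) (x y : T) : bool := (x != y) && R x y.

Definition tot_lt (P : ppr) (x y : car P) : bool := strict (fun a b => ph a b || pr a b) x y.

Definition rank (P : ppr) (x : car P) : nat := #|[pred y | tot_lt y x]|.

(* graph of the increasing bijection theta_{P,Q} : theta x = x' *)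
Definition theta_rel (P Q : ppr) (x : car P) (x' : car Q) : bool := rank x == rank x'.

(* P <= Q (for |P| = |Q|): theta(x) <=_h theta(y) in Q implies x <=_h y in P *)
Definition pp_le (P Q : ppr) : bool :=
  [forall x : car P, forall y : car P, forall x' : car Q, forall y' : car Q,
     [&& theta_rel x x', theta_rel y y' & ph x' y'] ==> ph x y].

Definition iota (P : ppr) : ppr := @PPr (car P) (@pr P) (@ph P).

Definition phi (P Q : ppr) : nat :=
  #|[pred xy : car P * car P | strict (@pr P) xy.1 xy.2 &&
       [exists x' : car Q, exists y' : car Q,
          [&& theta_rel xy.1 x', theta_rel xy.2 y' & strict (@ph Q) x' y']]]|
  + #|[pred xy : car P * car P | strict (@ph P) xy.1 xy.2 &&
       [exists x' : car Q, exists y' : car Q,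
          [&& theta_rel xy.1 x', theta_rel xy.2 y' & strict (@pr Q) x' y']]]|.

Definition pairing (K : fieldType) (q : K) (P Q : ppr) : K :=
  if (#|{: car P}| == #|{: car Q}|) && pp_le (iota P) Q then q ^+ phi P Q else 0.

Definition sum_rel (T U : finType) (RP : rel T) (RQ : rel U) (lr rl : bool)
  : rel (T + U)%type :=
  fun a b => match a, b with
             | inl x, inl y => RP x y
             | inr x, inr y => RQ x y
             | inl _, inr _ => lr
             | inr _, inl _ => rl
             end.

Definition tri (P Q : ppr) : ppr :=
  @PPr (car P + car Q)%type (sum_rel (@ph P) (@ph Q) true false)
                            (sum_rel (@pr P) (@pr Q) false false).

Definition concat (P Q : ppr) : ppr :=
  @PPr (car P + car Q)%type (sum_rel (@ph P) (@ph Q) false false)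
                            (sum_rel (@pr P) (@pr Q) true false).

Definition restr (P : ppr) (A : {set car P}) : ppr :=
  @PPr {x : car P | x \in A} (fun a b => ph (val a) (val b))
                              (fun a b => pr (val a) (val b)).

(* P = (P|S)(P|~S): exactly the relations of the product PQ across S and its complement *)
Definition is_split (P : ppr) (A : {set car P}) : bool :=
  [forall x : car P, forall y : car P, ((x \in A) && (y \notin A)) ==>
     [&& pr x y, ~~ pr y x, ~~ ph x y & ~~ ph y x]].

(* Delta'_q(P) as a formal sum of tensors (coefficient, P1, P2) *)
Definition Delta' (K : fieldType) (q : K) (P : ppr) : seq (K * ppr * ppr) :=
  [seq (q ^+ (#|A| * #|~: A|), restr A, restr (~: A))
  | A : {set car P} <- enum [set A : {set car P} | is_split A]].

(* Elements of H_PP are formal linear combinations: seq (K * ppr) *)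
Definition tri_lin (K : fieldType) (x y : seq (K * ppr)) : seq (K * ppr) :=
  [seq (a.1 * b.1, tri a.2 b.2) | a <- x, b <- y].

Definition Delta_lin (K : fieldType) (q : K) (z : seq (K * ppr)) : seq (K * ppr * ppr) :=
  flatten [seq [seq (c.1 * t.1.1, t.1.2, t.2) | t <- Delta' q c.2] | c <- z].

Definition pairing_lin (K : fieldType) (q : K) (x z : seq (K * ppr)) : K :=
  \sum_(a <- x) \sum_(c <- z) a.1 * c.1 * pairing q a.2 c.2.

Definition pairing2_lin (K : fieldType) (q : K) (x y : seq (K * ppr))
  (w : seq (K * ppr * ppr)) : K :=
  \sum_(a <- x) \sum_(b <- y) \sum_(t <- w)
     a.1 * b.1 * t.1.1 * pairing q a.2 t.1.2 * pairing q b.2 t.2.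

Definition all_plane (K : Type) (x : seq (K * ppr)) : bool := all (fun a => is_plane a.2) x.

(* Main.v *)
Require Import Defs.
From mathcomp Require Import all_boot all_order all_algebra.
From mathcomp Require Import zify.
Set Implicit Arguments. Unset Strict Implicit. Unset Printing Implicit Defensive.

Section Plane.
Variable P : ppr.
Hypothesis HP : is_plane P.
Let T := car P.

Lemma pl_ph_refl (x : T) : ph x x.
Proof. by case/and3P: HP => /and3P[/forallP H _ _] _ _. Qed.
Lemma pl_ph_anti (x y : T) : ph x y -> ph y x -> x = y.
Proof. case/and3P: HP => /and3P[_ /forallP H _] _ _ h1 h2.
by move: (H x) => /forallP /(_ y); rewrite h1 h2 => /eqP. Qed.
Lemma pl_ph_trans (x y z : T) : ph x y -> ph y z -> ph x z.
Proof. case/and3P: HP => /and3P[_ _ /forallP H] _ _ h1 h2.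
by move: (H x) => /forallP /(_ y) /forallP /(_ z); rewrite h1 h2. Qed.
Lemma pl_pr_anti (x y : T) : pr x y -> pr y x -> x = y.
Proof. case/and3P: HP => _ /and3P[_ /forallP H _] _ h1 h2.
by move: (H x) => /forallP /(_ y); rewrite h1 h2 => /eqP. Qed.
Lemma pl_pr_trans (x y z : T) : pr x y -> pr y z -> pr x z.
Proof. case/and3P: HP => _ /and3P[_ _ /forallP H] _ h1 h2.
by move: (H x) => /forallP /(_ y) /forallP /(_ z); rewrite h1 h2. Qed.
Lemma pl_cmp (x y : T) : x != y -> (ph x y || ph y x) = ~~ (pr x y || pr y x).
Proof. case/and3P: HP => _ _ /forallP H nxy.
by move: (H x) => /forallP /(_ y); rewrite nxy /comparab => /eqP. Qed.

Lemma tot_lt_trans (x y z : T) : tot_lt x y -> tot_lt y z -> tot_lt x z.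
Proof.
rewrite /tot_lt /strict => /andP[nxy hxy] /andP[nyz hyz].
have Cxy := pl_cmp nxy; have Cyz := pl_cmp nyz.
case: (eqVneq x z) => [exz|nxz].
  subst z; apply: False_ind; move: Cxy.
  case/orP: hxy => hxy; case/orP: hyz => hyz.
  - by move: nxy; rewrite (pl_ph_anti hxy hyz) eqxx.
  - by rewrite hxy hyz orbT.
  - by rewrite hxy hyz orbT.
  - by move: nxy; rewrite (pl_pr_anti hxy hyz) eqxx.
rewrite /=.
have Cxz := pl_cmp nxz.
case/orP: hxy => hxy; case/orP: hyz => hyz.
- by rewrite (pl_ph_trans hxy hyz).
- case hxz : (ph x z) => //=. case hxz' : (pr x z) => //.
  move: Cxz; rewrite hxz hxz' /=.
  case hzx: (ph z x) => /=.
    move=> _; move: Cyz; by rewrite (pl_ph_trans hzx hxy) orbT hyz.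
  move=> /esym/negbFE hzx'. move: Cxy; by rewrite (pl_pr_trans hyz hzx') hxy orbT.
- case hxz : (ph x z) => //=. case hxz' : (pr x z) => //.
  move: Cxz; rewrite hxz hxz' /=.
  case hzx: (ph z x) => /=.
    move=> _; move: Cxy; by rewrite (pl_ph_trans hyz hzx) orbT hxy.
  move=> /esym/negbFE hzx'. move: Cyz; by rewrite (pl_pr_trans hzx' hxy) hyz orbT.
- by rewrite (pl_pr_trans hxy hyz) orbT.
Qed.

Lemma tot_lt_total (x y : T) : x != y -> tot_lt x y || tot_lt y x.
Proof.
move=> nxy; rewrite /tot_lt /strict nxy eq_sym nxy /=.
move: (pl_cmp nxy); case: (ph x y); case: (ph y x); case: (pr x y); case: (pr y x) => //.
Qed.
End Plane.

Lemma rank_lt (P : ppr) (x : car P) : rank x < #|{: car P}|.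
Proof.
rewrite /rank; apply: proper_card; apply/properP; split.
  by apply/subsetP.
by exists x => //; rewrite inE /tot_lt /strict eqxx.
Qed.

Lemma rank_mono (P : ppr) : is_plane P -> forall x y : car P, tot_lt x y -> rank x < rank y.
Proof.
move=> HP x y hxy; rewrite /rank; apply: proper_card; apply/properP; split.
  by apply/subsetP => z; rewrite !inE => hz; apply: tot_lt_trans hxy.
by exists x; rewrite !inE // /tot_lt /strict eqxx.
Qed.

Lemma rank_inj (P : ppr) : is_plane P -> injective (@rank P).
Proof.
move=> HP x y e; apply/eqP; apply/negP => /negP nxy.
case/orP: (tot_lt_total HP nxy) => /(rank_mono HP); rewrite e ltnn //.
Qed.

Lemma rank_surj (P : ppr) : is_plane P -> forall i, i < #|{: car P}| -> exists x : car P, rank x = i.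
Proof.
move=> HP i hi.
pose f := fun x : car P => Ordinal (rank_lt x).
have finj : injective f by move=> x y /(congr1 val) /= /(rank_inj HP).
have := @inj_card_onto _ _ _ finj; rewrite card_ord => /(_ (leqnn _) (Ordinal hi)).
by case/codomP => x /(congr1 val) /= ->; exists x.
Qed.

Lemma card_sub_pred (T : finType) (A : {set T}) (p : pred T) :
  #|[pred y : {x : T | x \in A} | p (val y)]| = #|[pred x | (x \in A) && p x]|.
Proof.
rewrite -(card_imset _ val_inj); apply: eq_card => x; rewrite !inE.
apply/imsetP/andP => [[y hy ->]|[hA hp]].
  by split; [exact: valP | rewrite inE in hy].
by exists (exist _ x hA); rewrite ?inE.
Qed.

Lemma card_sum_pred (T U : finType) (p : pred (T + U)) :
  #|p| = #|[pred x | p (inl x)]| + #|[pred y | p (inr y)]|.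
Proof. by rewrite -!sum1_card big_sumType. Qed.

Definition cnt (T U : finType) (f : T -> U -> bool) : nat :=
  \sum_(x : T) \sum_(y : U) (f x y : nat).

Lemma card_cnt (T U : finType) (f : T -> U -> bool) :
  #|[pred xy : T * U | f xy.1 xy.2]| = cnt f.
Proof.
rewrite /cnt pair_bigA /= -sum1_card big_mkcond /=; apply: eq_bigr => p _.
by rewrite inE; case: (f _ _).
Qed.

Lemma cnt_sum (T U : finType) (f : T + U -> T + U -> bool) :
  cnt f = cnt (fun x y => f (inl x) (inl y)) + cnt (fun (x : T) (y : U) => f (inl x) (inr y))
        + (cnt (fun (x : U) (y : T) => f (inr x) (inl y)) + cnt (fun x y => f (inr x) (inr y))).
Proof.
rewrite /cnt big_sumType /=.
rewrite (eq_bigr (fun x : T => \sum_(y : T) (f (inl x) (inl y) : nat) + \sum_(y : U) (f (inl x) (inr y) : nat))); last by move=> x _; rewrite big_sumType.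
rewrite (eq_bigr (fun x : U => \sum_(y : T) (f (inr x) (inl y) : nat) + \sum_(y : U) (f (inr x) (inr y) : nat))); last by move=> x _; rewrite big_sumType.
by rewrite !big_split.
Qed.

Lemma cnt_ext (T U : finType) (f g : T -> U -> bool) : (forall x y, f x y = g x y) -> cnt f = cnt g.
Proof. by move=> H; apply: eq_bigr => x _; apply: eq_bigr => y _; rewrite H. Qed.

Lemma cnt_true (T U : finType) : cnt (fun (x : T) (y : U) => true) = #|T| * #|U|.
Proof.
rewrite /cnt (eq_bigr (fun _ => #|U|)); last by move=> x _; rewrite /= sum1_card.
by rewrite sum_nat_const.
Qed.

Lemma cnt_false (T U : finType) : cnt (fun (x : T) (y : U) => false) = 0.
Proof. by rewrite /cnt big1 // => x _; rewrite big1. Qed.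

Lemma tot_lt_restr (P : ppr) (A : {set car P}) (a b : car (restr A)) :
  tot_lt a b = tot_lt (val a) (val b).
Proof. by rewrite /tot_lt /strict /= val_eqE. Qed.

Lemma rank_iota (P : ppr) (x : car P) : @rank (Defs.iota P) x = rank x.
Proof. by apply: eq_card => y; rewrite !inE /tot_lt /strict /= orbC. Qed.

Lemma rank_tri_l (P Q : ppr) (x : car P) : @rank (tri P Q) (inl x) = rank x.
Proof.
rewrite /rank card_sum_pred.
rewrite (eq_card0 (A := [pred y : car Q | _])); last by move=> y; rewrite !inE /tot_lt /strict.
by rewrite addn0; apply: eq_card => y; rewrite !inE.
Qed.

Lemma rank_tri_r (P Q : ppr) (x : car Q) : @rank (tri P Q) (inr x) = #|{: car P}| + rank x.
Proof.
by rewrite /rank card_sum_pred; congr (_ + _).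
Qed.

Section Split.
Variables (R : ppr) (A : {set car R}).
Hypothesis HS : is_split A.

Lemma split_fact (a b : car R) : a \in A -> b \notin A ->
  [&& pr a b, ~~ pr b a, ~~ ph a b & ~~ ph b a].
Proof. by move=> ha hb; move: HS => /forallP /(_ a) /forallP /(_ b); rewrite ha hb. Qed.

Lemma rank_restrA (a : car (restr A)) : rank a = rank (val a).
Proof.
rewrite /rank.
rewrite (eq_card (B := [pred y : car (restr A) | tot_lt (val y) (val a)])); last by move=> y; rewrite !inE tot_lt_restr.
rewrite (card_sub_pred A (fun y => tot_lt y (val a))); apply: eq_card => y; rewrite !inE.
case hy: (y \in A) => //=.
case/and4P: (split_fact (valP a) (negbT hy)) => _ h1 _ h2.
by rewrite /tot_lt /strict (negbTE h1) (negbTE h2) andbF.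
Qed.

Lemma rank_restrB (b : car (restr (~: A))) : rank (val b) = #|A| + rank b.
Proof.
have hb : val b \notin A by move: (valP b); rewrite inE.
rewrite /rank -(cardID (mem A) [pred y | tot_lt y (val b)]); congr (_ + _).
  apply: eq_card => y; rewrite !inE andbC.
  case hy: (y \in A) => //=.
  case/and4P: (split_fact hy hb) => h1 _ _ _.
  rewrite /tot_lt /strict h1 orbT andbT.
  by apply/negP => /eqP e; move: hy; rewrite e (negbTE hb).
rewrite (eq_card (A := [pred y : car (restr (~: A)) | tot_lt y b]) (B := [pred y : car (restr (~:A)) | tot_lt (val y) (val b)])); last by move=> y; rewrite !inE tot_lt_restr.
rewrite (card_sub_pred (~: A) (fun y => tot_lt y (val b))); apply: eq_card => y; rewrite !inE andbC; by case: (y \in A).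
Qed.

Lemma rank_inA (a : car R) : a \in A -> rank a < #|A|.
Proof.
move=> ha; have := rank_restrA (exist _ a ha) => /= <-.
by have := rank_lt (exist _ a ha : car (restr A)); rewrite card_sig.
Qed.

Lemma rank_outA (b : car R) : b \notin A -> #|A| <= rank b.
Proof.
move=> hb; have hb' : b \in ~: A by rewrite inE.
by have := rank_restrB (exist _ b hb') => /= ->; rewrite leq_addr.
Qed.

Lemma split_eq : A = [set r | rank r < #|A|].
Proof.
apply/setP => r; rewrite inE; case hr: (r \in A); first by rewrite rank_inA.
by rewrite ltnNge rank_outA ?hr.
Qed.
End Split.

Definition Vr (Q : ppr) (s : rel (car Q)) (i j : nat) : bool :=
  [exists x', exists y', [&& i == rank x', j == rank y' & s x' y']].

Lemma ppleE (P Q : ppr) :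
  pp_le P Q = [forall x : car P, forall y : car P, Vr (@ph Q) (rank x) (rank y) ==> ph x y].
Proof.
apply/forallP/forallP => H x.
  apply/forallP => y; apply/implyP => /existsP[x' /existsP[y' hh]].
  by move: (H x) => /forallP /(_ y) /forallP /(_ x') /forallP /(_ y') /implyP; apply.
apply/forallP => y; apply/forallP => x'; apply/forallP => y'; apply/implyP => hh.
move: (H x) => /forallP /(_ y) /implyP; apply; apply/existsP; exists x'; apply/existsP; exists y'; exact hh.
Qed.

Lemma phiE (P Q : ppr) : phi P Q =
  cnt (fun x y : car P => strict (@pr P) x y && Vr (strict (@ph Q)) (rank x) (rank y)) +
  cnt (fun x y : car P => strict (@ph P) x y && Vr (strict (@pr Q)) (rank x) (rank y)).
Proof. by rewrite /phi -!card_cnt. Qed.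

Section SplitV.
Variables (R : ppr) (A : {set car R}).
Hypothesis HS : is_split A.

Lemma inA_of_rank (x : car R) : rank x < #|A| -> x \in A.
Proof. by move=> h; apply/negPn/negP => /(rank_outA HS); rewrite leqNgt h. Qed.

Lemma outA_of_rank (x : car R) : #|A| <= rank x -> x \notin A.
Proof. by move=> h; apply/negP => /(rank_inA HS); rewrite ltnNge h. Qed.

Lemma VrA (s : rel (car R)) (s' : rel (car (restr A)))
  (Hs : forall a b, s' a b = s (val a) (val b)) i j :
  i < #|A| -> j < #|A| -> Vr s i j = Vr s' i j.
Proof.
move=> hi hj; apply/existsP/existsP.
  case=> x' /existsP[y' /and3P[ei ej hs]].
  have hx : x' \in A by apply: inA_of_rank; rewrite -(eqP ei).
  have hy : y' \in A by apply: inA_of_rank; rewrite -(eqP ej).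
  exists (exist _ x' hx); apply/existsP; exists (exist _ y' hy).
  by rewrite Hs !(rank_restrA HS) /= ei ej hs.
case=> x' /existsP[y' /and3P[ei ej hs]].
exists (val x'); apply/existsP; exists (val y').
by rewrite -!(rank_restrA HS) ei ej -Hs hs.
Qed.

Lemma VrB (s : rel (car R)) (s' : rel (car (restr (~: A))))
  (Hs : forall a b, s' a b = s (val a) (val b)) i j :
  Vr s (#|A| + i) (#|A| + j) = Vr s' i j.
Proof.
apply/existsP/existsP.
  case=> x' /existsP[y' /and3P[ei ej hs]].
  have hx : x' \in ~: A by rewrite inE; apply: outA_of_rank; rewrite -(eqP ei) leq_addr.
  have hy : y' \in ~: A by rewrite inE; apply: outA_of_rank; rewrite -(eqP ej) leq_addr.
  exists (exist _ x' hx); apply/existsP; exists (exist _ y' hy).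
  have rx := rank_restrB HS (exist _ x' hx); have ry := rank_restrB HS (exist _ y' hy).
  simpl in rx, ry.
  by move: ei ej; rewrite Hs /= rx ry !eqn_add2l => -> ->.
case=> x' /existsP[y' /and3P[ei ej hs]].
exists (val x'); apply/existsP; exists (val y').
by rewrite !(rank_restrB HS) !eqn_add2l ei ej -Hs hs.
Qed.

Lemma Vr_cross1 i j : i < #|A| -> Vr (@ph R) i (#|A| + j) = false.
Proof.
move=> hi; apply/negbTE/existsP => [[x' /existsP[y' /and3P[ei ej h]]]].
have hx : x' \in A by apply: inA_of_rank; rewrite -(eqP ei).
have hy : y' \notin A by apply: outA_of_rank; rewrite -(eqP ej) leq_addr.
by case/and4P: (split_fact HS hx hy) => _ _; rewrite h.
Qed.

Lemma Vr_cross2 i j : i < #|A| -> Vr (@ph R) (#|A| + j) i = false.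
Proof.
move=> hi; apply/negbTE/existsP => [[x' /existsP[y' /and3P[ei ej h]]]].
have hy : y' \in A by apply: inA_of_rank; rewrite -(eqP ej).
have hx : x' \notin A by apply: outA_of_rank; rewrite -(eqP ei) leq_addr.
by case/and4P: (split_fact HS hy hx) => _ _ _; rewrite h.
Qed.

Lemma Vr_cross_pr i j : is_plane R -> i < #|A| -> #|A| + j < #|{: car R}| ->
  Vr (strict (@pr R)) i (#|A| + j) = true.
Proof.
move=> HR hi hj.
have [x' ex] := rank_surj HR (leq_trans hi (ltnW (leq_ltn_trans (leq_addr j _) hj))).
have [y' ey] := rank_surj HR hj.
have hx : x' \in A by apply: inA_of_rank; rewrite ex.
have hy : y' \notin A by apply: outA_of_rank; rewrite ey leq_addr.
apply/existsP; exists x'; apply/existsP; exists y'.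
rewrite ex ey !eqxx /strict; case/and4P: (split_fact HS hx hy) => -> _ _ _.
by rewrite andbT; apply/negP => /eqP e; move: hy; rewrite -e hx.
Qed.
End SplitV.

Lemma card_restr (P : ppr) (A : {set car P}) : #|{: car (restr A)}| = #|A|.
Proof. by rewrite /= card_sig; apply: eq_card => x; rewrite !inE. Qed.

Lemma card_tri (P Q : ppr) : #|{: car (tri P Q)}| = #|{: car P}| + #|{: car Q}|.
Proof. exact: card_sum. Qed.

Section Key.
Variables (P Q R : ppr) (A : {set car R}).
Hypothesis HS : is_split A.
Hypothesis hA : #|A| = #|{: car P}|.

Lemma pp_le_split :
  pp_le (Defs.iota (tri P Q)) R = pp_le (Defs.iota P) (restr A) && pp_le (Defs.iota Q) (restr (~: A)).
Proof.
rewrite !ppleE; apply/idP/idP.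
  move/forallP => H; apply/andP; split; apply/forallP => x; apply/forallP => y; apply/implyP => hv.
    move: (H (inl x)) => /forallP /(_ (inl y)) /implyP; apply.
    rewrite !rank_iota !rank_tri_l; rewrite !rank_iota in hv.
    by rewrite (VrA HS (s' := @ph (restr A))) // hA rank_lt.
  move: (H (inr x)) => /forallP /(_ (inr y)) /implyP; apply.
  rewrite !rank_iota !rank_tri_r -hA; rewrite !rank_iota in hv.
  by rewrite (VrB HS (s' := @ph (restr (~: A)))).
case/andP => /forallP HP /forallP HQ; apply/forallP => u; apply/forallP => v; apply/implyP.
case: u => x; case: v => y; rewrite !rank_iota ?rank_tri_l ?rank_tri_r -?hA => hv.
- move: (HP x) => /forallP /(_ y) /implyP; apply; rewrite !rank_iota.
  by rewrite -(VrA HS (s := @ph R)) // hA rank_lt.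
- by move: hv; rewrite Vr_cross1 // hA rank_lt.
- by move: hv; rewrite Vr_cross2 // hA rank_lt.
- move: (HQ x) => /forallP /(_ y) /implyP; apply; rewrite !rank_iota.
  by rewrite -(VrB HS (s := @ph R)).
Qed.

Hypothesis HR : is_plane R.
Hypothesis hB : #|~: A| = #|{: car Q}|.

Lemma phi_split :
  phi (tri P Q) R = phi P (restr A) + phi Q (restr (~: A)) + #|{: car P}| * #|{: car Q}|.
Proof.
have hR : #|{: car R}| = #|A| + #|{: car Q}| by rewrite -hB cardsC.
have hs : forall (T : ppr) (B : {set car T}) (s : rel (car T)) (a b : car (restr B)),
    strict (fun u v : car (restr B) => s (val u) (val v)) a b = strict s (val a) (val b).
  by move=> T B s a b; rewrite /strict val_eqE.
rewrite !phiE !cnt_sum.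
transitivity (
  (cnt (fun x y : car P => strict (@pr P) x y && Vr (strict (@ph (restr A))) (rank x) (rank y)) + 0)
  + (0 + cnt (fun x y : car Q => strict (@pr Q) x y && Vr (strict (@ph (restr (~: A)))) (rank x) (rank y)))
  + ((cnt (fun x y : car P => strict (@ph P) x y && Vr (strict (@pr (restr A))) (rank x) (rank y)) + #|{: car P}| * #|{: car Q}|)
  + (0 + cnt (fun x y : car Q => strict (@ph Q) x y && Vr (strict (@pr (restr (~: A)))) (rank x) (rank y))))); last first.
  lia.
congr (_ + _ + (_ + _) + ((_ + _) + (_ + _))).
- apply: cnt_ext => x y; rewrite !rank_tri_l (VrA HS (s' := strict (@ph (restr A)))) // ?hA ?rank_lt // => a b; rewrite hs.
- by apply: etrans (cnt_false (car P) (car Q)); apply: cnt_ext.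
- by apply: etrans (cnt_false (car Q) (car P)); apply: cnt_ext.
- apply: cnt_ext => x y; rewrite !rank_tri_r -hA (VrB HS (s' := strict (@ph (restr (~: A))))) // => a b; rewrite hs.
- apply: cnt_ext => x y; rewrite !rank_tri_l (VrA HS (s' := strict (@pr (restr A)))) // ?hA ?rank_lt // => a b; rewrite hs.
- apply: etrans (cnt_true (car P) (car Q)); apply: cnt_ext => x y.
  rewrite rank_tri_l rank_tri_r -hA Vr_cross_pr //; first by rewrite hA rank_lt.
  by rewrite hR ltn_add2l rank_lt.
- by apply: etrans (cnt_false (car Q) (car P)); apply: cnt_ext.
- apply: cnt_ext => x y; rewrite !rank_tri_r -hA (VrB HS (s' := strict (@pr (restr (~: A))))) // => a b; rewrite hs.
Qed.
End Key.

Lemma card_rank_lt (R : ppr) k : is_plane R -> k <= #|{: car R}| ->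
  #|[set r : car R | rank r < k]| = k.
Proof.
move=> HR hk.
pose f := fun x : car R => Ordinal (rank_lt x).
have finj : injective f by move=> x y /(congr1 val) /= /(rank_inj HR).
rewrite -(card_imset _ finj).
have -> : f @: [set r | rank r < k] = widen_ord hk @: [set: 'I_k].
  apply/setP => i; apply/imsetP/imsetP.
    case=> r; rewrite inE => hr ->; exists (Ordinal hr); [by [] | by apply: val_inj].
  case=> j _ ->.
  have [r er] := rank_surj HR (ltn_ord (widen_ord hk j)).
  exists r; first by rewrite inE er /= ltn_ord.
  by apply: val_inj => /=; exact: esym er.
by rewrite card_imset ?cardsT ?card_ord //; by move=> u v /(congr1 val) /= /val_inj.
Qed.

Lemma not_split_pp (P Q R : ppr) : is_plane P -> is_plane Q -> is_plane R ->
  #|{: car P}| + #|{: car Q}| = #|{: car R}| ->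
  ~~ is_split [set r : car R | rank r < #|{: car P}|] ->
  pp_le (Defs.iota (tri P Q)) R = false.
Proof.
move=> HP HQ HR hn /forallPn[a /forallPn[b]].
rewrite negb_imply !inE -leqNgt => /andP[/andP[ha hb] hbad].
have hbn : rank b < #|{: car P}| + #|{: car Q}| by rewrite hn rank_lt.
have [x ex] := rank_surj HP ha.
have hyb : rank b - #|{: car P}| < #|{: car Q}| by rewrite ltn_subLR.
have [y ey] := rank_surj HQ hyb.
rewrite ppleE; apply/negbTE/forallPn.
case hab: (ph a b).
  exists (inl x); apply/forallPn; exists (inr y); rewrite negb_imply andbT.
  rewrite !rank_iota rank_tri_l rank_tri_r; apply/existsP; exists a; apply/existsP; exists b.
  by rewrite ex ey subnKC // !eqxx hab.
case hba: (ph b a).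
  exists (inr y); apply/forallPn; exists (inl x); rewrite negb_imply andbT.
  rewrite !rank_iota rank_tri_l rank_tri_r; apply/existsP; exists b; apply/existsP; exists a.
  by rewrite ex ey subnKC // !eqxx hba.
exfalso.
have nab : a != b by apply/negP => /eqP e; move: ha; rewrite e ltnNge hb.
have := pl_cmp HR nab; rewrite hab hba /= => /esym/negbFE hp.
case hpba : (pr b a).
  have : tot_lt b a by rewrite /tot_lt /strict eq_sym nab hpba orbT.
  by move/(rank_mono HR); rewrite ltnNge (leq_trans (ltnW ha) hb).
move: hp hbad; rewrite hpba orbF => ->.
by rewrite hab hba.
Qed.

Section Main.
Import GRing.Theory.
Local Open Scope ring_scope.

Lemma key (K : fieldType) (q : K) (P Q R : ppr) : is_plane P -> is_plane Q -> is_plane R ->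
  pairing q (tri P Q) R = \sum_(t <- Delta' q R) t.1.1 * pairing q P t.1.2 * pairing q Q t.2.
Proof.
move=> HP HQ HR.
rewrite /Delta' big_map big_enum /=.
set kP := #|{: car P}|; set kQ := #|{: car Q}|; set n := #|{: car R}|.
set A0 := [set r : car R | (rank r < kP)%N].
rewrite (bigID (fun A : {set car R} => (#|A| == kP) && (#|~: A| == kQ))) /=.
rewrite [X in _ = _ + X]big1 ?addr0; last first.
  move=> A /andP[_ hn]; rewrite /pairing !card_restr.
  by case/nandP: hn => hn; rewrite ?(eq_sym kP) ?(eq_sym kQ) (negbTE hn) /= ?mulr0 ?mul0r.
have HC : forall A : {set car R},
    (A \in [set A | is_split A]) && ((#|A| == kP) && (#|~: A| == kQ)) =
    (A == A0) && [&& is_split A0, #|A0| == kP & #|~: A0| == kQ].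
  move=> A; rewrite inE; apply/idP/idP.
    case/and3P => hs /eqP e1 /eqP e2.
    have eA : A = A0 by rewrite (split_eq hs) e1.
    by rewrite -eA eqxx hs e1 e2 !eqxx.
  by case/andP => /eqP -> /and3P[-> -> ->].
rewrite (eq_bigl _ _ HC).
rewrite {1}/pairing card_tri.
case: (eqVneq (kP + kQ)%N n) => hn.
  have hA0 : #|A0| = kP by apply: card_rank_lt => //; rewrite -/n -hn leq_addr.
  have hB0 : #|~: A0| = kQ.
    by move: (cardsC A0); rewrite hA0 -/n -hn => /addnI.
  rewrite /= hA0 hB0 !eqxx !andbT.
  case hs: (is_split A0).
    rewrite (big_pred1 A0); last by move=> A; rewrite /= andbT.
    rewrite (@pp_le_split P Q R A0) // (@phi_split P Q R A0) // /pairing !card_restr hA0 hB0 !eqxx /=.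
    case: (pp_le _ (restr A0)); case: (pp_le _ (restr (~: A0))); rewrite ?mulr0 ?mul0r //=.
    by rewrite -!exprD; congr (_ ^+ _); rewrite -/kP -/kQ; lia.
  rewrite big_pred0; last by move=> A; rewrite /= andbF.
  by rewrite not_split_pp // hs.
have -> : [&& is_split A0, #|A0| == kP & #|~: A0| == kQ] = false.
  apply/negbTE/and3P => [[_ /eqP e1 /eqP e2]]; move: hn; by rewrite -e1 -e2 cardsC eqxx.
by rewrite big_pred0 // => A; rewrite /= andbF.
Qed.
End Main.

Import GRing.Theory.

Lemma eq_big_all (R : Type) (idx : R) (op : R -> R -> R) (I : Type) (r : seq I) (p : pred I)
  (F1 F2 : I -> R) : all p r -> (forall i, p i -> F1 i = F2 i) ->
  \big[op/idx]_(i <- r) F1 i = \big[op/idx]_(i <- r) F2 i.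
Proof.
move=> hr H; elim: r hr => [|i r IH] /=; first by rewrite !big_nil.
by case/andP => hi hr; rewrite !big_cons H // IH.
Qed.

Theorem proposition24 (K : fieldType) (q : K) (x y z : seq (K * ppr)) :
  all_plane x -> all_plane y -> all_plane z ->
  pairing_lin q (tri_lin x y) z = pairing2_lin q x y (Delta_lin q z).
Proof.
move=> hx hy hz; rewrite /all_plane in hx hy hz.
rewrite /pairing_lin /pairing2_lin /tri_lin /Delta_lin big_allpairs_dep /=.
apply: (@eq_big_all K 0%R +%R _ x _ _ _ hx) => a ha.
apply: (@eq_big_all K 0%R +%R _ y _ _ _ hy) => b hb.
rewrite big_flatten big_map.
apply: (@eq_big_all K 0%R +%R _ z _ _ _ hz) => c hc.
rewrite big_map (key q ha hb hc) GRing.mulr_sumr.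
by apply: eq_bigr => t _ /=; rewrite !GRing.mulrA.
Qed.
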